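(* Let $A=M_{12}$ acting primitively on $12$ points, and for $r\geq 1$ let $G=A\wr C_r$, where $C_r$ is a cyclic group of order $r$ acting regularly on $r$ coordinates, with $G$ acting in product action on $n=12^r$ points. Then for all sufficiently large $r$, $k(G)>n^{1.08}$.
   Context: $k(X)$ denotes the number of conjugacy classes of a finite group $X$. Product action: $A\wr C_r=A^r\rtimes C_r$ acts on $\Delta^r$ ($|\Delta|=12$), with $A^r$ acting coordinatewise and $C_r$ permuting coordinates. *)

(* Defs.v *)
From mathcomp Require Import all_boot all_fingroup.
Set Implicit Arguments. Unset Strict Implicit. Unset Printing Implicit Defensive.
Local Open Scope group_scope.

Definition pt (k : nat) : 'I_12 := inord k.
Definition tp (x y : nat) : {perm 'I_12} := tperm (pt x) (pt y).
(* the 3-cycle x -> y -> z -> x  (MathComp: (s * t) u = t (s u)) *)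
Definition cyc3 (x y z : nat) : {perm 'I_12} := tp y z * tp x y.

(* ATLAS standard generators of M12 in its natural action on 12 points,
   shifted to 0-based labels:
   a = (1,4)(3,10)(5,11)(6,12),  b = (1,8,9)(2,3,4)(5,12,11)(6,10,7). *)
Definition m12a : {perm 'I_12} := tp 0 3 * tp 2 9 * tp 4 10 * tp 5 11.
Definition m12b : {perm 'I_12} :=
  cyc3 0 7 8 * cyc3 1 2 3 * cyc3 4 11 10 * cyc3 5 9 6.

Definition M12 : {group {perm 'I_12}} := <<[set m12a; m12b]>>%G.

Definition Omega (r : nat) := {ffun 'I_r -> 'I_12}.

Definition base_fun r (g : {ffun 'I_r -> {perm 'I_12}}) (x : Omega r) : Omega r :=
  [ffun i => g i (x i)].
Lemma base_fun_inj r g : injective (@base_fun r g).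
Proof.
move=> x y /ffunP H; apply/ffunP => i; have := H i; rewrite !ffunE.
exact: perm_inj.
Qed.
Definition basep r g : {perm Omega r} := perm (@base_fun_inj r g).

Definition shift_fun r (x : Omega r) : Omega r := [ffun i => x (ordS i)].
Lemma shift_fun_inj r : injective (@shift_fun r).
Proof.
move=> x y /ffunP H; apply/ffunP => i; have := H (ord_pred i); rewrite !ffunE.
by rewrite ord_predK.
Qed.
Definition shiftp r : {perm Omega r} := perm (@shift_fun_inj r).

Definition base_group r : {set {perm Omega r}} :=
  [set basep g | g : {ffun 'I_r -> {perm 'I_12}} & [forall i, g i \in M12]].
Definition wreath_M12 (r : nat) : {group {perm Omega r}} :=
  <<base_group r :|: [set shiftp r]>>%G.

Definition kcl (gT : finGroupType) (X : {set gT}) : nat := #|classes X|.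

(* Main.v *)
Require Import Defs.
From mathcomp Require Import all_boot all_fingroup.
From mathcomp Require Import zify.
Set Implicit Arguments. Unset Strict Implicit. Unset Printing Implicit Defensive.

Section Arith.
Local Open Scope nat_scope.
Lemma aux1 {X Y : nat} : 50^25 * X <= 51^25 * Y -> 5 * X <= 9 * Y.
Proof. lia. Qed.
Lemma aux2 {P Q X Y : nat} : P * Y < Q -> 5 * X <= 9 * Y -> 5 * P * X < 9 * Q.
Proof. nia. Qed.
Lemma base : 5 ^ 250 * 251 ^ 25 < 9 ^ 250.
Proof. lia. Qed.
Lemma key r : 250 <= r -> 5^r * r.+1^25 < 9^r.
Proof.
elim: r => [//|r IH]; rewrite leq_eqVlt => /orP[/eqP<-|H]; first exact: base.
have {}IH := IH H.
have S1 : 50 * r.+2 <= 51 * r.+1.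
  by clear IH; lia.
have S2 : (50 * r.+2)^25 <= (51 * r.+1)^25 by rewrite leq_exp2r.
rewrite !expnMn in S2.
rewrite (expnS 5) (expnS 9); exact: aux2 IH (aux1 S2).
Qed.
Lemma c12 : 12 ^ 27 * 9 <= 15 ^ 25 * 5.
Proof. lia. Qed.
Lemma powle a b r : a <= b -> a ^ r <= b ^ r.
Proof. by move=> H; elim: r => // r IH; rewrite !expnS leq_mul. Qed.
Lemma arith a b r k : 0 < a -> a * 9 <= b * 5 -> 5^r * r.+1^25 < 9^r ->
  b^r <= (k * r.+1)^25 -> a^r < k^25.
Proof.
move=> Ha Hab K B.
have A : a ^ r * r.+1 ^ 25 < b ^ r.
  rewrite -(@ltn_pmul2r (5 ^ r)) ?expn_gt0 //.
  apply: (@leq_trans (a ^ r * 9 ^ r)).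
    by rewrite -mulnA ltn_pmul2l ?expn_gt0 ?Ha // mulnC.
  by rewrite -!expnMn powle.
rewrite expnMn in B.
by rewrite -(@ltn_pmul2r (r.+1 ^ 25)) ?expn_gt0 // (leq_trans A B).
Qed.
Lemma final_arith r k : 250 <= r -> 15 ^ r <= k * r.+1 -> (12 ^ r) ^ 27 < k ^ 25.
Proof.
move=> Hr Hk.
rewrite (expnAC 12).
apply: (@arith (12 ^ 27) (15 ^ 25) r k _ c12 (@key r Hr)); first by rewrite expn_gt0.
by rewrite (expnAC 15) leq_exp2r.
Qed.

End Arith.


Section Mirror.
Local Open Scope nat_scope.
Definition hexL : seq (seq nat) := [::
[:: 0; 1; 2; 3; 4; 8];
[:: 0; 1; 2; 3; 5; 10];
[:: 0; 1; 2; 3; 6; 9];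
[:: 0; 1; 2; 3; 7; 11];
[:: 0; 1; 2; 4; 5; 9];
[:: 0; 1; 2; 4; 6; 7];
[:: 0; 1; 2; 4; 10; 11];
[:: 0; 1; 2; 5; 6; 11];
[:: 0; 1; 2; 5; 7; 8];
[:: 0; 1; 2; 6; 8; 10];
[:: 0; 1; 2; 7; 9; 10];
[:: 0; 1; 2; 8; 9; 11];
[:: 0; 1; 3; 4; 5; 6];
[:: 0; 1; 3; 4; 7; 10];
[:: 0; 1; 3; 4; 9; 11];
[:: 0; 1; 3; 5; 7; 9];
[:: 0; 1; 3; 5; 8; 11];
[:: 0; 1; 3; 6; 7; 8];
[:: 0; 1; 3; 6; 10; 11];
[:: 0; 1; 3; 8; 9; 10];
[:: 0; 1; 4; 5; 7; 11];
[:: 0; 1; 4; 5; 8; 10];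
[:: 0; 1; 4; 6; 8; 11];
[:: 0; 1; 4; 6; 9; 10];
[:: 0; 1; 4; 7; 8; 9];
[:: 0; 1; 5; 6; 7; 10];
[:: 0; 1; 5; 6; 8; 9];
[:: 0; 1; 5; 9; 10; 11];
[:: 0; 1; 6; 7; 9; 11];
[:: 0; 1; 7; 8; 10; 11];
[:: 0; 2; 3; 4; 5; 7];
[:: 0; 2; 3; 4; 6; 11];
[:: 0; 2; 3; 4; 9; 10];
[:: 0; 2; 3; 5; 6; 8];
[:: 0; 2; 3; 5; 9; 11];
[:: 0; 2; 3; 6; 7; 10];
[:: 0; 2; 3; 7; 8; 9];
[:: 0; 2; 3; 8; 10; 11];
[:: 0; 2; 4; 5; 6; 10];
[:: 0; 2; 4; 5; 8; 11];
[:: 0; 2; 4; 6; 8; 9];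
[:: 0; 2; 4; 7; 8; 10];
[:: 0; 2; 4; 7; 9; 11];
[:: 0; 2; 5; 6; 7; 9];
[:: 0; 2; 5; 7; 10; 11];
[:: 0; 2; 5; 8; 9; 10];
[:: 0; 2; 6; 7; 8; 11];
[:: 0; 2; 6; 9; 10; 11];
[:: 0; 3; 4; 5; 8; 9];
[:: 0; 3; 4; 5; 10; 11];
[:: 0; 3; 4; 6; 7; 9];
[:: 0; 3; 4; 6; 8; 10];
[:: 0; 3; 4; 7; 8; 11];
[:: 0; 3; 5; 6; 7; 11];
[:: 0; 3; 5; 6; 9; 10];
[:: 0; 3; 5; 7; 8; 10];
[:: 0; 3; 6; 8; 9; 11];
[:: 0; 3; 7; 9; 10; 11];
[:: 0; 4; 5; 6; 7; 8];
[:: 0; 4; 5; 6; 9; 11];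
[:: 0; 4; 5; 7; 9; 10];
[:: 0; 4; 6; 7; 10; 11];
[:: 0; 4; 8; 9; 10; 11];
[:: 0; 5; 6; 8; 10; 11];
[:: 0; 5; 7; 8; 9; 11];
[:: 0; 6; 7; 8; 9; 10];
[:: 1; 2; 3; 4; 5; 11];
[:: 1; 2; 3; 4; 6; 10];
[:: 1; 2; 3; 4; 7; 9];
[:: 1; 2; 3; 5; 6; 7];
[:: 1; 2; 3; 5; 8; 9];
[:: 1; 2; 3; 6; 8; 11];
[:: 1; 2; 3; 7; 8; 10];
[:: 1; 2; 3; 9; 10; 11];
[:: 1; 2; 4; 5; 6; 8];
[:: 1; 2; 4; 5; 7; 10];
[:: 1; 2; 4; 6; 9; 11];
[:: 1; 2; 4; 7; 8; 11];
[:: 1; 2; 4; 8; 9; 10];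
[:: 1; 2; 5; 6; 9; 10];
[:: 1; 2; 5; 7; 9; 11];
[:: 1; 2; 5; 8; 10; 11];
[:: 1; 2; 6; 7; 8; 9];
[:: 1; 2; 6; 7; 10; 11];
[:: 1; 3; 4; 5; 7; 8];
[:: 1; 3; 4; 5; 9; 10];
[:: 1; 3; 4; 6; 7; 11];
[:: 1; 3; 4; 6; 8; 9];
[:: 1; 3; 4; 8; 10; 11];
[:: 1; 3; 5; 6; 8; 10];
[:: 1; 3; 5; 6; 9; 11];
[:: 1; 3; 5; 7; 10; 11];
[:: 1; 3; 6; 7; 9; 10];
[:: 1; 3; 7; 8; 9; 11];
[:: 1; 4; 5; 6; 7; 9];
[:: 1; 4; 5; 6; 10; 11];
[:: 1; 4; 5; 8; 9; 11];
[:: 1; 4; 6; 7; 8; 10];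
[:: 1; 4; 7; 9; 10; 11];
[:: 1; 5; 6; 7; 8; 11];
[:: 1; 5; 7; 8; 9; 10];
[:: 1; 6; 8; 9; 10; 11];
[:: 2; 3; 4; 5; 6; 9];
[:: 2; 3; 4; 5; 8; 10];
[:: 2; 3; 4; 6; 7; 8];
[:: 2; 3; 4; 7; 10; 11];
[:: 2; 3; 4; 8; 9; 11];
[:: 2; 3; 5; 6; 10; 11];
[:: 2; 3; 5; 7; 8; 11];
[:: 2; 3; 5; 7; 9; 10];
[:: 2; 3; 6; 7; 9; 11];
[:: 2; 3; 6; 8; 9; 10];
[:: 2; 4; 5; 6; 7; 11];
[:: 2; 4; 5; 7; 8; 9];
[:: 2; 4; 5; 9; 10; 11];
[:: 2; 4; 6; 7; 9; 10];
[:: 2; 4; 6; 8; 10; 11];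
[:: 2; 5; 6; 7; 8; 10];
[:: 2; 5; 6; 8; 9; 11];
[:: 2; 7; 8; 9; 10; 11];
[:: 3; 4; 5; 6; 7; 10];
[:: 3; 4; 5; 6; 8; 11];
[:: 3; 4; 5; 7; 9; 11];
[:: 3; 4; 6; 9; 10; 11];
[:: 3; 4; 7; 8; 9; 10];
[:: 3; 5; 6; 7; 8; 9];
[:: 3; 5; 8; 9; 10; 11];
[:: 3; 6; 7; 8; 10; 11];
[:: 4; 5; 6; 8; 9; 10];
[:: 4; 5; 7; 8; 10; 11];
[:: 4; 6; 7; 8; 9; 11];
[:: 5; 6; 7; 9; 10; 11]].
Definition words : seq (seq bool) := [:: [:: ]; [:: false; true; false; false; true; false; true; false; false; true; false; true; false; true; false]; [:: true]; [:: false; false; true; false; true; false; false; true; false; true]; [:: false; false; true; false; false; true; false; true; false; false; true; false; true; false; true; false; true]; [:: false; false; true; false; false; true; false; true; false; true]; [:: false; true; false; false; true]; [:: false; true; false]; [:: true; false]; [:: false; true; false; false; true; false; false; true; false; true; false; true; false; false; true]; [:: true; false; false; true; false; true; false; true; false; false; true; false; true; false; true; false; false; true; false; true; false]; [:: true; false; false; true; false; true; false; true; false; true; false; false]; [:: false]; [:: true; false; true; false; false; true; false; false; true; false; true; false; true; false; true; false; false]; [:: false; false; true; false; true; false; true]].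
Definition TA : seq nat := [:: 3; 1; 9; 0; 10; 11; 6; 7; 8; 2; 4; 5].
Definition TB : seq nat := [:: 7; 2; 3; 1; 11; 9; 5; 8; 0; 6; 4; 10].
Definition TBi : seq nat := [:: 8; 3; 1; 2; 10; 6; 9; 0; 7; 5; 11; 4].
End Mirror.

Section MirrorLemmas.
Local Open Scope nat_scope.
Definition I12 := iota 0 12.
Definition Zl (X : nat -> nat) (K : seq nat) (p : nat) : seq nat :=
  [seq q <- I12 | has (fun k => iter k X p == q) K].
Definition img (t : nat -> nat) (l : seq nat) : seq nat := [seq q <- I12 | t q \in l].
Definition cnt (P : pred (seq nat)) K X := count (fun p => P (Zl X K p)) I12.
Definition one (l : seq nat) := size l == 1.
Definition inH (l : seq nat) := l \in hexL.
Definition fm X := [:: cnt one [:: 0; 1] X; cnt one [:: 0; 2] X; cnt one [:: 0; 3] X;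
                        cnt inH [:: 0; 2; 4; 5; 6; 9] X].

Lemma memI12 n : (n \in I12) = (n < 12).
Proof. by rewrite mem_iota. Qed.

Lemma iter_lt X k p : (forall n, n < 12 -> X n < 12) -> p < 12 -> iter k X p < 12.
Proof. by move=> HX Hp; elim: k => //= k IH; exact: HX. Qed.

Lemma fm_eq_in X Y : (forall n, n < 12 -> X n < 12) ->
  (forall n, n < 12 -> X n = Y n) -> fm X = fm Y.
Proof.
move=> HX E.
have Hit k p : p < 12 -> iter k X p = iter k Y p.
  by move=> Hp; elim: k => //= k IH; rewrite -IH E //; exact: iter_lt.
have HZ K p : p \in I12 -> Zl X K p = Zl Y K p.
  rewrite memI12 => Hp; apply: eq_filter => q; apply: eq_has => k /=; by rewrite Hit.
have Hc P K : cnt P K X = cnt P K Y.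
  by apply: eq_in_count => p Hp; rewrite HZ.
by rewrite /fm !Hc.
Qed.

Lemma perm_I12 u v : (forall n, n < 12 -> u n < 12) -> (forall n, n < 12 -> v n < 12) ->
  (forall n, n < 12 -> v (u n) = n) -> (forall n, n < 12 -> u (v n) = n) ->
  perm_eq (map u I12) I12.
Proof.
move=> Hu Hv Hvu Huv; apply: uniq_perm.
- rewrite map_inj_in_uniq ?iota_uniq // => a b; rewrite !memI12 => Ha Hb E.
  by rewrite -(Hvu a Ha) E Hvu.
- exact: iota_uniq.
- move=> n; rewrite memI12; apply/mapP/idP => [[m]|Hn].
    by rewrite memI12 => Hm ->; exact: Hu.
  by exists (v n); rewrite ?memI12 ?Hv ?Huv.
Qed.

Section Inv.
Variables s t X : nat -> nat.
Hypothesis s_lt : forall n, n < 12 -> s n < 12.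
Hypothesis t_lt : forall n, n < 12 -> t n < 12.
Hypothesis ts : forall n, n < 12 -> t (s n) = n.
Hypothesis st : forall n, n < 12 -> s (t n) = n.
Hypothesis hexs : forall l, l \in hexL -> img s l \in hexL.
Hypothesis hext : forall l, l \in hexL -> img t l \in hexL.
Hypothesis X_lt : forall n, n < 12 -> X n < 12.

Lemma L1 k p : p < 12 -> iter k (fun n => s (X (t n))) (s p) = s (iter k X p).
Proof. by move=> Hp; elim: k => //= k ->; rewrite ts //; exact: iter_lt. Qed.

Lemma L2 K p : p < 12 -> Zl (fun n => s (X (t n))) K (s p) = img t (Zl X K p).
Proof.
move=> Hp; apply: eq_in_filter => q; rewrite memI12 => Hq.
rewrite mem_filter memI12 t_lt // andbT.
apply: eq_has => k /=; rewrite L1 //.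
apply/eqP/eqP => [<-|->]; last by rewrite st.
by rewrite ts //; exact: iter_lt.
Qed.

Lemma L3 P : size (img t [seq q <- I12 | P q]) = size [seq q <- I12 | P q].
Proof.
rewrite /img !size_filter.
have -> : count (fun q => t q \in [seq q <- I12 | P q]) I12 =
          count (fun q => q \in [seq q <- I12 | P q]) (map t I12) by rewrite count_map.
have /seq.permP E := perm_I12 t_lt s_lt st ts; rewrite E.
apply: eq_in_count => q Hq; by rewrite mem_filter Hq andbT.
Qed.

Lemma L4 P : (img t [seq q <- I12 | P q] \in hexL) = ([seq q <- I12 | P q] \in hexL).
Proof.
apply/idP/idP => [H|]; last exact: hext.
have := hexs H.
suff -> : img s (img t [seq q <- I12 | P q]) = [seq q <- I12 | P q] by [].
rewrite /img; apply: eq_in_filter => q; rewrite memI12 => Hq.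
by rewrite mem_filter memI12 s_lt // andbT ts // mem_filter memI12 Hq andbT.
Qed.

Lemma fm_inv : fm (fun n => s (X (t n))) = fm X.
Proof.
have L5 (g : pred nat) : count g I12 = count (fun p => g (s p)) I12.
  have /seq.permP E := perm_I12 s_lt t_lt ts st; by rewrite -E count_map.
have Hc P K : (forall l, P (img t (Zl X K l)) = P (Zl X K l)) ->
  cnt P K (fun n => s (X (t n))) = cnt P K X.
  move=> HP; rewrite /cnt L5; apply: eq_in_count => p; rewrite memI12 => Hp.
  by rewrite L2 // HP.
rewrite /fm !Hc // => l; rewrite /Zl ?L3 ?L4 /one /inH ?L3 ?L4 //.
Qed.
End Inv.
End MirrorLemmas.
Local Open Scope group_scope.

Definition ordc (n : nat) : 'I_12 := @Ordinal 12 (n %% 12) (@ltn_pmod n 12 isT).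
Lemma inordE n : (n < 12)%N -> inord n = ordc n :> 'I_12.
Proof. by move=> H; apply: val_inj; rewrite /= inordK // modn_small. Qed.

Definition xf (x : {perm 'I_12}) (n : nat) : nat := val (x (inord n)).
Lemma xf_lt x n : (xf x n < 12)%N. Proof. exact: ltn_ord. Qed.
Lemma xfM x y n : xf (x * y) n = xf y (xf x n).
Proof. by rewrite /xf permM inord_val. Qed.
Lemma xf1 n : (n < 12)%N -> xf 1 n = n.
Proof. by move=> H; rewrite /xf perm1; exact: inordK. Qed.
Lemma xfK a n : (n < 12)%N -> xf a^-1 (xf a n) = n.
Proof. by move=> H; rewrite /xf inord_val permK; exact: inordK. Qed.
Lemma xfKV a n : (n < 12)%N -> xf a (xf a^-1 n) = n.
Proof. by move=> H; rewrite /xf inord_val permKV; exact: inordK. Qed.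
Lemma xfJ x a n : xf (x ^ a) n = xf a (xf x (xf a^-1 n)).
Proof. by rewrite /xf conjgE !permM !inord_val. Qed.

Lemma xfA n : (n < 12)%N -> xf m12a n = nth 0%N TA n.
Proof.
move=> H; rewrite /xf (inordE H).
rewrite /m12a /tp /pt !permM /tperm !permE /= !inordE //.
do 12! (case: n H => [|n] H; first by []).
by [].
Qed.

Lemma xfB n : (n < 12)%N -> xf m12b n = nth 0%N TB n.
Proof.
move=> H; rewrite /xf (inordE H).
rewrite /m12b /cyc3 /tp /pt !permM /tperm !permE /= !inordE //.
do 12! (case: n H => [|n] H; first by []).
by [].
Qed.

Definition f (x : {perm 'I_12}) : seq nat := fm (xf x).

Lemma f_gen a T Ti :
  (forall n, (n < 12)%N -> xf a n = nth 0%N T n) ->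
  all (fun n => (nth 0 Ti n < 12) && (nth 0 T (nth 0 Ti n) == n))%N I12 ->
  all (fun l => (img (nth 0%N T) l \in hexL) && (img (nth 0%N Ti) l \in hexL)) hexL ->
  forall x, f (x ^ a) = f x.
Proof.
move=> HA /allP H2 /allP H3 x.
have Hi n : (n < 12)%N -> xf a^-1 n = nth 0%N Ti n.
  move=> Hn; have /andP[Hlt /eqP E] := H2 n (etrans (memI12 n) Hn).
  by rewrite -{1}E -HA // xfK.
rewrite /f (@fm_eq_in _ (fun n => xf a (xf x (xf a^-1 n)))); last first.
- by move=> n _; rewrite xfJ.
- by move=> n _; exact: xf_lt.
apply: fm_inv.
- by move=> n _; exact: xf_lt.
- by move=> n _; exact: xf_lt.
- exact: xfK.
- exact: xfKV.
- move=> l Hl; have /andP[Hs _] := H3 l Hl.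
  suff -> : img (xf a) l = img (nth 0%N T) l by [].
  by apply: eq_in_filter => q; rewrite memI12 => Hq; rewrite HA.
- move=> l Hl; have /andP[_ Ht] := H3 l Hl.
  suff -> : img (xf a^-1) l = img (nth 0%N Ti) l by [].
  by apply: eq_in_filter => q; rewrite memI12 => Hq; rewrite Hi.
- by move=> n _; exact: xf_lt.
Qed.

Lemma fA x : f (x ^ m12a) = f x.
Proof. by apply: (f_gen (T := TA) (Ti := TA)); [exact: xfA | vm_compute | vm_compute]. Qed.
Lemma fB x : f (x ^ m12b) = f x.
Proof. by apply: (f_gen (T := TB) (Ti := TBi)); [exact: xfB | vm_compute | vm_compute]. Qed.

Lemma f_M12 x a : a \in M12 -> f (x ^ a) = f x.
Proof.
move=> Ha.
pose S := [set b : {perm 'I_12} | [forall y, f (y ^ b) == f y]].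
have gS : group_set S.
  apply/group_setP; split; first by rewrite inE; apply/forallP => y; rewrite conjg1.
  move=> b c; rewrite !inE => /forallP Hb /forallP Hc; apply/forallP => y.
  by rewrite conjgM (eqP (Hc _)) (eqP (Hb _)).
have : <<[set m12a; m12b]>> \subset Group gS.
  rewrite gen_subG; apply/subsetP => b; rewrite !inE => /orP[]/eqP->;
    apply/forallP=> y; apply/eqP; [exact: fA | exact: fB].
move/subsetP/(_ a Ha); rewrite inE => /forallP /(_ x) /eqP //.
Qed.

Definition gen (c : bool) : {perm 'I_12} := if c then m12a else m12b.
Fixpoint repP (w : seq bool) : {perm 'I_12} := if w is c :: w' then gen c * repP w' else 1.
Definition genF (c : bool) (n : nat) : nat := nth 0%N (if c then TA else TB) n.
Fixpoint repF (w : seq bool) (n : nat) : nat := if w is c :: w' then repF w' (genF c n) else n.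
Lemma xf_rep w n : (n < 12)%N -> xf (repP w) n = repF w n.
Proof.
elim: w n => [|c w IH] n Hn /=; first exact: xf1.
rewrite xfM IH ?xf_lt //; by case: c; rewrite /genF /= ?xfA ?xfB.
Qed.
Lemma repP_M12 w : repP w \in M12.
Proof.
elim: w => [|c w IH] /=; first exact: group1.
rewrite groupM // mem_gen //; by case: c; rewrite /gen !inE eqxx ?orbT.
Qed.
Lemma f_rep w : f (repP w) = fm (repF w).
Proof. rewrite /f; apply: fm_eq_in => n Hn; [exact: xf_lt | exact: xf_rep]. Qed.
Lemma uniq_reps : uniq (map (fun w => fm (repF w)) words). Proof. by vm_compute. Qed.
Definition rep (i : 'I_15) : {perm 'I_12} := repP (nth [::] words i).
Lemma rep_M12 i : rep i \in M12. Proof. exact: repP_M12. Qed.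
Lemma rep_inj i j : f (rep i) = f (rep j) -> i = j.
Proof.
rewrite /rep !f_rep => E; apply: ord_inj; apply/eqP.
have Hs : size (map (fun w => fm (repF w)) words) = 15%N by rewrite size_map.
rewrite -(nth_uniq [::] _ _ uniq_reps) ?Hs //.
have Sw : size words = 15%N by [].
by rewrite !(nth_map [::]) ?Sw // E.
Qed.
Local Open Scope group_scope.

Section Wreath.
Variable r : nat.
Hypothesis r_pos : (0 < r)%N.
Local Notation G := (wreath_M12 r).
Local Notation fT := {ffun 'I_r -> {perm 'I_12}}.

Lemma basepE (g : fT) u : basep g u = [ffun i => g i (u i)].
Proof. by rewrite /basep permE. Qed.

Lemma shiftpE u : shiftp r u = [ffun i => u (ordS i)].
Proof. by rewrite /shiftp permE. Qed.

Lemma basep_inj : injective (@basep r).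
Proof.
move=> g g' E; apply/ffunP => i; apply/permP => p.
have := congr1 (fun y : {perm Omega r} => y ([ffun=> p] : Omega r) i) E.
by rewrite /= !basepE !ffunE.
Qed.

Lemma basepM (g c : fT) : basep g * basep c = basep [ffun i => g i * c i].
Proof.
apply/permP => u; rewrite permM !basepE; apply/ffunP => i; by rewrite !ffunE permM.
Qed.

Lemma basepJ (g c : fT) : (basep g) ^ (basep c) = basep [ffun i => g i ^ c i].
Proof.
apply: (mulgI (basep c)); rewrite -conjgC !basepM; congr basep.
by apply/ffunP => i; rewrite !ffunE conjgC.
Qed.

Lemma basepSh (g : fT) : (basep g) ^ (shiftp r) = basep [ffun i => g (ordS i)].
Proof.
apply: (mulgI (shiftp r)); rewrite -conjgC.
apply/permP => u; rewrite !permM; apply/ffunP => i.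
by rewrite shiftpE !basepE shiftpE !ffunE.
Qed.

Lemma iter_ordS k (i : 'I_r) : val (iter k (@ordS r) i) = (i + k) %% r.
Proof.
elim: k => [|k IH] /=; first by rewrite addn0 modn_small.
by rewrite IH -addn1 modnDml addn1 addnS.
Qed.

Definition Cset (h : fT) : {set {perm Omega r}} :=
  [set y | [exists g : fT, [&& [forall i, g i \in M12], y == basep g &
     [exists k : 'I_r, [forall i, f (g i) == f (h (iter k (@ordS r) i))]]]]].

Lemma C_base (g : fT) : (forall i, g i \in M12) -> basep g \in Cset g.
Proof.
move=> Hg; rewrite inE; apply/existsP; exists g; rewrite eqxx /=.
apply/andP; split; first by apply/forallP.
by apply/existsP; exists (Ordinal r_pos); apply/forallP.
Qed.

Lemma C_conj (h : fT) a : (forall y, y \in Cset h -> y ^ a \in Cset h) -> a \in 'N(Cset h).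
Proof.
move=> H; rewrite inE; apply/subsetP => z; rewrite mem_conjg => /H.
by rewrite conjgKV.
Qed.

Lemma C_norm (h : fT) : G \subset 'N(Cset h).
Proof.
have : <<base_group r :|: [set shiftp r]>> \subset 'N(Cset h); last by [].
rewrite gen_subG; apply/subsetP => a /setUP[Ha|/set1P->]; apply: C_conj => y;
  rewrite inE => /existsP[g /and3P[/forallP Hg /eqP -> /existsP[k /forallP Hk]]].
- case/imsetP: Ha => c; rewrite inE => /forallP Hc ->.
  rewrite basepJ inE; apply/existsP; exists [ffun i => g i ^ c i]; rewrite eqxx /=.
  apply/andP; split; first by apply/forallP => i; rewrite ffunE groupJ.
  apply/existsP; exists k; apply/forallP => i; rewrite ffunE f_M12 //; exact: Hk.
- rewrite basepSh inE; apply/existsP; exists [ffun i => g (ordS i)]; rewrite eqxx /=.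
  apply/andP; split; first by apply/forallP => i; rewrite ffunE.
  apply/existsP; exists (ordS k); apply/forallP => i; rewrite ffunE.
  suff -> : iter (ordS k) (@ordS r) i = iter k (@ordS r) (ordS i) by exact: Hk.
  apply: ord_inj; rewrite !iter_ordS /=.
  by rewrite modnDmr modnDml addnS addSn.
Qed.

Lemma class_sub (g : fT) : (forall i, g i \in M12) -> (basep g) ^: G \subset Cset g.
Proof.
move=> Hg; apply/subsetP => z /imsetP [a Ha ->].
by rewrite memJ_norm ?C_base // (subsetP (C_norm g)).
Qed.

Lemma basep_G (g : fT) : (forall i, g i \in M12) -> basep g \in G.
Proof.
move=> Hg; rewrite mem_gen // inE; apply/orP; left; apply/imsetP; exists g => //.
by rewrite inE; apply/forallP.
Qed.

Definition gw (w : {ffun 'I_r -> 'I_15}) : fT := [ffun i => rep (w i)].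
Definition Xw w := basep (gw w).
Lemma gwM w i : gw w i \in M12. Proof. by rewrite ffunE rep_M12. Qed.

Definition Hc (K : {set {perm Omega r}}) := [pick w' : {ffun 'I_r -> 'I_15} | (Xw w') ^: G == K].
Definition pk w (o : option {ffun 'I_r -> 'I_15}) : option 'I_r :=
  if o is Some h then
    [pick k : 'I_r | [forall i, f (gw w i) == f (gw h (iter k (@ordS r) i))]] else None.
Definition Kw w := (Xw w) ^: G.
Definition Phi w := (Kw w, pk w (Hc (Kw w))).

Lemma Phi2 w : exists h, Hc (Kw w) = Some h /\ Kw h = Kw w.
Proof.
rewrite /Hc; case: pickP => [h /eqP Eh|Hn]; first by exists h.
by have := Hn w; rewrite eqxx.
Qed.

Lemma pk_some v h : Kw v = Kw h -> exists k, pk v (Some h) = Some k /\ (forall i, f (gw v i) = f (gw h (iter k (@ordS r) i))).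
Proof.
move=> Ev.
have : Xw v \in Cset (gw h).
  apply: (subsetP (class_sub (gwM h))).
  suff : Xw v \in Kw v by rewrite Ev.
  exact: class_refl.
rewrite inE => /existsP[g /and3P[_ /eqP Eg /existsP[k0 Hk0]]].
move: Eg => /basep_inj Eg; rewrite -Eg in Hk0.
rewrite /pk; case: pickP => [k Hk|Hn]; last first.
  by have H0 := negbT (Hn k0); case/negP: H0.
exists k; split; first by [].
move=> i; apply/eqP; exact: (forallP Hk i).
Qed.

Lemma Phi_inj : injective Phi.
Proof.
move=> w w' E.
have E1 : Kw w = Kw w' := f_equal fst E.
have E2 : pk w (Hc (Kw w)) = pk w' (Hc (Kw w')) := f_equal snd E.
have [h [Hw Ehw]] := Phi2 w.
have Hw' : Hc (Kw w') = Some h := etrans (f_equal Hc (esym E1)) Hw.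
have E3 : pk w (Some h) = pk w' (Some h) :=
  etrans (f_equal (pk w) (esym Hw)) (etrans E2 (f_equal (pk w') Hw')).
have [k [Pk Hk]] := pk_some (esym Ehw).
have [k' [Pk' Hk']] := pk_some (etrans (esym E1) (esym Ehw)).
have Ekk : k = k'.
  by case: (etrans (esym Pk) (etrans E3 Pk')).
apply/ffunP => i; apply: rep_inj.
have G1 : gw w i = rep (w i) by rewrite ffunE.
have G2 : gw w' i = rep (w' i) by rewrite ffunE.
subst k'.
have T1 := etrans (Hk i) (esym (Hk' i)).
have T2 := etrans (congr1 f (esym G1)) T1.
exact (etrans T2 (congr1 f G2)).
Qed.

Lemma count_bound : (15 ^ r <= kcl G * r.+1)%N.
Proof.
have -> : (15 ^ r)%N = #|Phi @: [set: {ffun 'I_r -> 'I_15}]|.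
  by rewrite (card_imset _ Phi_inj) cardsT card_ffun !card_ord.
have -> : (kcl G * r.+1)%N = #|setX (classes G) [set: option 'I_r]|.
  by rewrite cardsX cardsT card_option card_ord.
apply: subset_leq_card; apply/subsetP => z /imsetP[w _ ->].
rewrite inE; apply/andP; split; last by rewrite inE.
exact (mem_classes (basep_G (gwM w))).
Qed.
End Wreath.

Local Close Scope group_scope.

(* k(G) > n^(1.08) with n = 12^r, i.e. k(G)^25 > (12^r)^27 *)
Theorem lemma4p1 : exists r0 : nat, forall r : nat, 1 <= r -> r0 <= r ->
  (12 ^ r) ^ 27 < (kcl (wreath_M12 r)) ^ 25.
Proof.
exists 250 => r H1 Hr.
exact: (@final_arith r _ Hr (@count_bound r H1)).
Qed.
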